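(* Let $G$ be a finite group. Then every subsemigroup of $\mathbb{N}\times G$ is finitely generated; consequently $\mathbb{N}\times G$ has only countably many subsemigroups.
   Context: $\mathbb{N}=\{1,2,3,\dots\}$ is the free monogenic semigroup (positive integers under addition); $\mathbb{N}\times G$ is the direct product with componentwise operation. *)

(* Defs.v *)
From mathcomp Require Import all_boot all_fingroup.
Set Implicit Arguments. Unset Strict Implicit. Unset Printing Implicit Defensive.

(* Elements of N x G are represented as pairs (n, g) : nat * gT with 0 < n
   (N = {1,2,3,...}).  The operation is componentwise: (m,g)(n,h) = (m+n, gh). *)
Definition NGmul (gT : finGroupType) (x y : nat * gT) : nat * gT :=
  (x.1 + y.1, (x.2 * y.2)%g).

Definition is_subsemigroup (gT : finGroupType) (S : nat * gT -> Prop) : Prop :=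
  (forall x, S x -> 0 < x.1) /\ (forall x y, S x -> S y -> S (NGmul x y)).

Inductive generated (gT : finGroupType) (F : seq (nat * gT)) : nat * gT -> Prop :=
  | gen_base x : x \in F -> generated F x
  | gen_mul x y : generated F x -> generated F y -> generated F (NGmul x y).

Definition finitely_generated (gT : finGroupType) (S : nat * gT -> Prop) : Prop :=
  exists F : seq (nat * gT),
    (forall x, x \in F -> S x) /\ (forall x, S x <-> generated F x).

Definition countably_many_subsemigroups (gT : finGroupType) : Prop :=
  exists e : nat -> (nat * gT -> Prop),
    forall S, is_subsemigroup S -> exists n, forall x, S x <-> e n x.

(* Main.v *)
Require Import Defs.
From mathcomp Require Import all_boot all_fingroup.
From Stdlib Require Import ClassicalEpsilon.
From mathcomp Require Import zify.

Definition decb (P : Prop) : bool := if excluded_middle_informative P then true else false.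
Lemma decbP (P : Prop) : decb P <-> P.
Proof. rewrite /decb; case: excluded_middle_informative => //. Qed.

Lemma bound_list (X : eqType) (P : nat -> X -> Prop) (l : seq X) :
  (forall b b' x, P b x -> b <= b' -> P b' x) ->
  (forall x, x \in l -> exists b, P b x) ->
  exists b, forall x, x \in l -> P b x.
Proof.
move=> mono; elim: l => [|y l IH] H; first by exists 0.
have [b1 Hb1] := H y (mem_head _ _).
have [b2 Hb2] : exists b, forall x, x \in l -> P b x.
  by apply: IH => x Hx; apply: H; rewrite in_cons Hx orbT.
exists (maxn b1 b2) => x; rewrite in_cons => /orP [/eqP ->|Hx].
  by apply: mono Hb1 _; rewrite leq_maxl.
by apply: mono (Hb2 _ Hx) _; rewrite leq_maxr.
Qed.

Lemma gen_sub (gT : finGroupType) (S : nat * gT -> Prop) (F : seq (nat * gT)) :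
  is_subsemigroup S -> (forall x : nat * gT, x \in F -> S x) -> forall x : nat * gT, Defs.generated F x -> S x.
Proof.
move=> [_ HS] HF x; elim => [y /HF //|y z _ Hy _ Hz]; exact: HS.
Qed.

Lemma fg (gT : finGroupType) (S : nat * gT -> Prop) :
  is_subsemigroup S -> finitely_generated S.
Proof.
move=> SS; have [Spos Smul] := SS.
case: (classic (exists x, S x)) => [[[n0 g0] H0]|Hne]; last first.
  exists [::]; split => // x; split => [Sx|]; first by case: Hne; exists x.
  by move=> H; case: Hne; exists x; apply: (@gen_sub _ S [::] SS _ x H).
set p := (#[g0]%g * n0).
have pos0 : 0 < n0 by apply: (Spos _ H0).
have ppos : 0 < p by rewrite /p muln_gt0 order_gt0.
have Hpow : forall j, S (j.+1 * n0, (g0 ^+ j.+1)%g).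
  elim => [|j IH]; first by rewrite mul1n expg1.
  have := Smul _ _ IH H0; rewrite /NGmul /=.
  by rewrite -expgSr mulSn addnC.
have Hp : S (p, 1%g).
  have := Hpow (#[g0]%g).-1; rewrite prednK ?order_gt0 // expg_order //.
have Hpj : forall j, S (j.+1 * p, 1%g).
  elim => [|j IH]; first by rewrite mul1n.
  have := Smul _ _ IH Hp; rewrite /NGmul /= mulg1.
  by rewrite mulSn addnC.
have Hadd : forall a g j, S (a, g) -> S (a + j * p, g).
  move=> a g [|j] Ha; first by rewrite mul0n addn0.
  by have := Smul _ _ Ha (Hpj j); rewrite /NGmul /= mulg1.
have Hloc : forall rg : nat * gT, exists b, forall a, S (a, rg.2) -> a %% p = rg.1 ->
     b <= a -> S (a - p, rg.2).
  move=> [r g] /=.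
  case: (classic (exists a0, S (a0, g) /\ a0 %% p = r)) => [[a0 [Ha0 Hr]]|Hn];
    last by exists 0 => a Ha Hr; case: Hn; exists a.
  exists a0.+1 => a Ha Hr' Hle.
  have : p %| a - a0 by rewrite -eqn_mod_dvd ?Hr ?Hr' // ltnW.
  case/dvdnP => j Hj.
  case: j Hj => [|i] Hi; first by move: Hi; lia.
  have -> : a - p = a0 + i * p by move: Hi; rewrite mulSn; lia.
  exact: Hadd.
have [B HB] := @bound_list _
  (fun b (rg : nat * gT) => forall a, S (a, rg.2) -> a %% p = rg.1 -> b <= a -> S (a - p, rg.2))
  [seq (r, g) | r <- iota 0 p, g <- enum gT]
  (fun b b' x H hb a Ha Hr hb' => H a Ha Hr (leq_trans hb hb'))
  (fun x _ => Hloc x).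
set F := [seq x <- [seq (n, g) | n <- iota 0 B, g <- enum gT] | decb (S x)].
have HF : forall x, x \in F -> S x by move=> x; rewrite mem_filter => /andP [/decbP].
exists F; split => // x; split; last by apply: gen_sub.
have: forall m (x : nat * gT), x.1 < m -> S x -> Defs.generated F x; last by apply; apply: ltnSn.
elim => // m IH [n g] /= Hm Sx.
case: (ltnP n B) => HnB.
  apply: Defs.gen_base; rewrite mem_filter; apply/andP; split; first by apply/decbP.
  by apply: allpairs_f; rewrite ?mem_iota ?mem_enum.
have Hin : (n %% p, g) \in [seq (r, g) | r <- iota 0 p, g <- enum gT].
  apply: allpairs_f; rewrite ?mem_enum // mem_iota /= add0n ltn_mod ppos //.
have Snp := HB _ Hin n Sx erefl HnB.
have npos := Spos _ Snp; rewrite /= in npos.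
have -> : (n, g) = NGmul (n - p, g) (p, 1%g) by rewrite /NGmul /= mulg1 subnK //; lia.
apply: Defs.gen_mul; apply: IH => //=; lia.
Qed.

Theorem lemma3p1 (gT : finGroupType) :
  (forall S : nat * gT -> Prop, is_subsemigroup S -> finitely_generated S) /\
  countably_many_subsemigroups gT.
Proof.
split; first exact: fg.
exists (fun n x => match (unpickle n : option (seq (nat * gT))) with
                   | Some F => Defs.generated F x | None => False end).
move=> S SS; have [F [_ HF]] := @fg _ S SS.
by exists (pickle F); rewrite pickleK.
Qed.
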